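(* Let $n\in\mathbb{N}_{+}$, $a\in\mathbb{R}_{\ge 0}$ and $b\in[0,\tfrac12]$, and consider the ODE system \[ \dot{x}_i = x_i(1 - x_i)(x_i - b) - (n - 1)a x_i + \sum_{j=1,\, j\neq i}^{n} a x_j,\qquad i=1,\dots,n. \] For any steady state $x=(x_1,\dots,x_n)\in\mathbb{R}_{\ge 0}^n$ of this system (i.e. a nonnegative point at which all right-hand sides vanish), the coordinates $x_1,\dots,x_n$ take at most three distinct values.
   Context: A steady state of the system for given parameters $(a,b)$ is a point $x\in\mathbb{R}_{\ge 0}^n$ at which the right-hand side of every equation vanishes; only nonnegative steady states are considered. *)

(* Defs.v *)
From mathcomp Require Import all_boot all_order all_algebra.
From mathcomp Require Import reals.
Set Implicit Arguments. Unset Strict Implicit. Unset Printing Implicit Defensive.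
Import Order.TTheory GRing.Theory Num.Theory.
Local Open Scope ring_scope.

Definition rhs (R : realType) (n : nat) (a b : R) (x : 'I_n -> R) (i : 'I_n) : R :=
  x i * (1 - x i) * (x i - b) - (n%:R - 1) * a * x i
  + \sum_(j < n | j != i) a * x j.

Definition steady_state (R : realType) (n : nat) (a b : R) (x : 'I_n -> R) : Prop :=
  (forall i, 0 <= x i) /\ (forall i, rhs a b x i = 0).

(* Main.v *)
Require Import Defs.
From mathcomp Require Import all_boot all_order all_algebra.
From mathcomp Require Import reals.
From mathcomp Require Import ring.
Import Order.TTheory GRing.Theory Num.Theory.
Local Open Scope ring_scope.

Theorem theorem1 (R : realType) (n : nat) (a b : R)
  (hn : (0 < n)%N) (ha : 0 <= a) (hb0 : 0 <= b) (hb1 : b <= 1 / 2)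
  (x : 'I_n -> R) (hx : steady_state a b x) :
  (size (undup [seq x i | i <- enum 'I_n]) <= 3)%N.
Proof.
case: hx => _ hr.
set S := \sum_(j < n) x j.
set p : {poly R} := Poly [:: a * S; - (b + n%:R * a); 1 + b; -1].
have hp0 : p != 0.
  apply/eqP => h; have := congr1 (fun q : {poly R} => q`_3) h.
  rewrite coef_Poly coef0 /=; apply/eqP; rewrite oppr_eq0; exact: oner_neq0.
have hsz : (size p <= 4)%N by apply: leq_trans (size_Poly _) _.
have hroots : all (root p) (undup [seq x i | i <- enum 'I_n]).
  apply/allP => z; rewrite mem_undup => /mapP [i _ ->].
  rewrite /root horner_Poly /=.
  have := hr i; rewrite /rhs.
  have -> : \sum_(j < n | j != i) a * x j = a * S - a * x i.
    by rewrite /S [in RHS](bigD1 i) //= mulrDr mulr_sumr addrAC subrr add0r.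
  move=> h; apply/eqP; apply: etrans h; ring.
have := max_poly_roots hp0 hroots (undup_uniq _).
move=> h.
by rewrite -ltnS; apply: leq_trans h hsz.
Qed.
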